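(* Fix a real number $\beta>-1$ and let $\phi$ be an analytic self-map of $\mathbb{D}$ such that the composition operator $C_\phi f=f\circ\phi$ is complex symmetric on $A^2_\beta$. Then neither $C_\phi$ nor $C_\phi^*$ is hypercyclic.
   Context: $\mathbb{D}$ is the open unit disc. For $\beta>-1$, $A^2_\beta$ is the Hilbert space of analytic functions $f(z)=\sum_{n\ge0}\widehat f(n)z^n$ on $\mathbb{D}$ with inner product $\langle f,g\rangle=\sum_{n\ge0}\frac{n!\,\Gamma(2+\beta)}{\Gamma(n+2+\beta)}\widehat f(n)\overline{\widehat g(n)}$ (equivalently the $L^2$ inner product with respect to $(\beta+1)(1-|z|^2)^\beta dA(z)$). A conjugation is a conjugate-linear map $C$ with $C^2=I$ and $\langle Cf,Cg\rangle=\langle g,f\rangle$; a bounded operator $T$ is complex symmetric if $CT=T^*C$ for some conjugation $C$. An operator $T$ on a Hilbert space $\mathcal H$ is hypercyclic if there is $f\in\mathcal H$ whose orbit $\{T^nf:n\ge0\}$ is dense in $\mathcal H$. *)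

(* Defs.v *)
From Stdlib Require Import Reals ClassicalEpsilon Arith Factorial.
From Coquelicot Require Import Coquelicot.
Open Scope R_scope.

Definition Disc : Type := {z : C | Cmod z < 1}.
Definition dval (z : Disc) : C := proj1_sig z.

Definition analytic (f : Disc -> C) : Prop :=
  forall z0 : Disc, exists r : R, 0 < r /\ exists c : nat -> C,
    forall z : Disc, Cmod (Cminus (dval z) (dval z0)) < r ->
      is_series (V := C_NormedModule)
        (fun n => Cmult (c n) (Cpow (Cminus (dval z) (dval z0)) n)) (f z).

Definition taylor0 (f : Disc -> C) (a : nat -> C) : Prop :=
  exists r : R, 0 < r /\
    forall z : Disc, Cmod (dval z) < r ->
      is_series (V := C_NormedModule) (fun n => Cmult (a n) (Cpow (dval z) n)) (f z).

Definition coef (f : Disc -> C) : nat -> C :=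
  epsilon (inhabits (fun _ : nat => (0%R, 0%R) : C)) (taylor0 f).

Fixpoint poch (b : R) (n : nat) : R :=
  match n with
  | O => 1
  | S m => poch b m * (b + INR m)
  end.

(** weight n! Gamma(2+beta) / Gamma(n+2+beta) = n! / (2+beta)_n *)
Definition weight (beta : R) (n : nat) : R := INR (Factorial.fact n) / poch (2 + beta) n.

Definition inA2 (beta : R) (f : Disc -> C) : Prop :=
  analytic f /\ ex_series (fun n => weight beta n * (Cmod (coef f n)) ^ 2).

Definition A2term (beta : R) (f g : Disc -> C) (n : nat) : C :=
  Cmult (RtoC (weight beta n)) (Cmult (coef f n) (Cconj (coef g n))).

Definition A2inner (beta : R) (f g : Disc -> C) : C :=
  (Series (fun n => Re (A2term beta f g n)), Series (fun n => Im (A2term beta f g n))).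

Definition A2norm (beta : R) (f : Disc -> C) : R :=
  sqrt (Series (fun n => weight beta n * (Cmod (coef f n)) ^ 2)).

Definition fadd (f g : Disc -> C) : Disc -> C := fun z => Cplus (f z) (g z).
Definition fsub (f g : Disc -> C) : Disc -> C := fun z => Cminus (f z) (g z).
Definition fscal (l : C) (f : Disc -> C) : Disc -> C := fun z => Cmult l (f z).

Definition comp_op (phi : Disc -> Disc) (f : Disc -> C) : Disc -> C := fun z => f (phi z).

Definition conjugation (beta : R) (Cj : (Disc -> C) -> (Disc -> C)) : Prop :=
  (forall f, inA2 beta f -> inA2 beta (Cj f)) /\
  (forall f g, inA2 beta f -> inA2 beta g -> Cj (fadd f g) = fadd (Cj f) (Cj g)) /\
  (forall l f, inA2 beta f -> Cj (fscal l f) = fscal (Cconj l) (Cj f)) /\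
  (forall f, inA2 beta f -> Cj (Cj f) = f) /\
  (forall f g, inA2 beta f -> inA2 beta g ->
     A2inner beta (Cj f) (Cj g) = A2inner beta g f).

Definition adjoint (beta : R) (T S : (Disc -> C) -> (Disc -> C)) : Prop :=
  (forall g, inA2 beta g -> inA2 beta (S g)) /\
  (forall f g, inA2 beta f -> inA2 beta g ->
     A2inner beta (T f) g = A2inner beta f (S g)).

Definition bounded_op (beta : R) (T : (Disc -> C) -> (Disc -> C)) : Prop :=
  (forall f, inA2 beta f -> inA2 beta (T f)) /\
  (forall f g, inA2 beta f -> inA2 beta g -> T (fadd f g) = fadd (T f) (T g)) /\
  (forall l f, inA2 beta f -> T (fscal l f) = fscal l (T f)) /\
  exists M : R, forall f, inA2 beta f -> A2norm beta (T f) <= M * A2norm beta f.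

Definition complex_symmetric (beta : R) (T : (Disc -> C) -> (Disc -> C)) : Prop :=
  bounded_op beta T /\
  exists Cj, conjugation beta Cj /\
  exists S, adjoint beta T S /\
    forall f, inA2 beta f -> Cj (T f) = S (Cj f).

Definition hypercyclic (beta : R) (T : (Disc -> C) -> (Disc -> C)) : Prop :=
  exists f, inA2 beta f /\
    forall g, inA2 beta g -> forall eps : R, 0 < eps ->
      exists n : nat, A2norm beta (fsub (Nat.iter n T f) g) < eps.

(* Main.v *)
Require Import Defs.
From Stdlib Require Import Reals.
From Coquelicot Require Import Coquelicot.
From Stdlib Require Import Lra FunctionalExtensionality ClassicalEpsilon.

Ltac Csolve := repeat match goal with x : C |- _ => destruct x end;
  unfold Cminus, Cplus, Cmult, Copp, Cconj, RtoC, Re, Im in *; simpl in *;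
  try (apply injective_projections; simpl; ring).

Lemma Cminus_0r (x : C) : Cminus x (RtoC 0) = x.
Proof. Csolve. Qed.

Lemma is_series_Re (u : nat -> C) (l : C) :
  is_series (V := C_NormedModule) u l -> is_series (fun n => Re (u n)) (Re l).
Proof.
  unfold is_series. intros H.
  assert (E : forall N, sum_n (fun n => Re (u n)) N = Re (sum_n u N)).
  { induction N. rewrite !sum_O. reflexivity.
    rewrite !sum_Sn, IHN. reflexivity. }
  eapply filterlim_ext. intros N. symmetry. apply E.
  eapply filterlim_comp. exact H.
  intros P [eps HP]. exists eps. intros y [Hy1 Hy2]. apply HP. exact Hy1.
Qed.

Lemma is_series_Im (u : nat -> C) (l : C) :
  is_series (V := C_NormedModule) u l -> is_series (fun n => Im (u n)) (Im l).
Proof.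
  unfold is_series. intros H.
  assert (E : forall N, sum_n (fun n => Im (u n)) N = Im (sum_n u N)).
  { induction N. rewrite !sum_O. reflexivity.
    rewrite !sum_Sn, IHN. reflexivity. }
  eapply filterlim_ext. intros N. symmetry. apply E.
  eapply filterlim_comp. exact H.
  intros P [eps HP]. exists eps. intros y [Hy1 Hy2]. apply HP. exact Hy2.
Qed.

Lemma zero_in : Cmod (RtoC 0) < 1.
Proof. rewrite Cmod_0. lra. Qed.
Definition zeroD : Disc := exist _ (RtoC 0) zero_in.

Definition toD (x : R) : Disc :=
  match Rlt_dec (Cmod (RtoC x)) 1 with
  | left p => exist _ (RtoC x) p
  | right _ => zeroD
  end.

Lemma toD_val x : Rabs x < 1 -> dval (toD x) = RtoC x.
Proof.
  intros H. unfold toD. destruct Rlt_dec as [p|p]. reflexivity.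
  exfalso. apply p. rewrite Cmod_R. exact H.
Qed.

Lemma pser_of_taylor f a : taylor0 f a -> exists r, 0 < r /\ r <= 1 /\
  forall x, Rabs x < r ->
    is_pseries (fun n => Re (a n)) x (Re (f (toD x))) /\
    is_pseries (fun n => Im (a n)) x (Im (f (toD x))).
Proof.
  intros [ra [Hra Ha]]. exists (Rmin ra 1). split; [apply Rmin_pos; lra|].
  split; [apply Rmin_r|]. intros x Hx.
  assert (Hx1 : Rabs x < 1) by (eapply Rlt_le_trans; [exact Hx| apply Rmin_r]).
  assert (Hxa : Rabs x < ra) by (eapply Rlt_le_trans; [exact Hx| apply Rmin_l]).
  assert (Hs := Ha (toD x)). rewrite toD_val in Hs by exact Hx1.
  rewrite Cmod_R in Hs. specialize (Hs Hxa).
  split; apply is_pseries_R.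
  - apply is_series_Re in Hs. eapply is_series_ext; [|exact Hs].
    intros n. cbv beta. rewrite <- RtoC_pow. rewrite re_scal_r. reflexivity.
  - apply is_series_Im in Hs. eapply is_series_ext; [|exact Hs].
    intros n. cbv beta. rewrite <- RtoC_pow. rewrite im_scal_r. reflexivity.
Qed.

Lemma CV_pos (u : nat -> R) r (Hr : 0 < r) (F : R -> R) :
  (forall x, Rabs x < r -> is_pseries u x (F x)) -> Rbar_lt 0 (CV_radius u).
Proof.
  intros H.
  destruct (Rbar_lt_le_dec 0 (CV_radius u)) as [h|h]; [exact h|].
  exfalso.
  assert (Hx : Rabs (r/2) < r) by (rewrite Rabs_pos_eq; lra).
  specialize (H _ Hx). apply is_pseries_R in H.
  apply (CV_disk_outside u (r/2)).
  - eapply Rbar_le_lt_trans. exact h. simpl. rewrite Rabs_pos_eq; lra.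
  - apply ex_series_lim_0. eexists. exact H.
Qed.

Lemma pser_uniq (u v : nat -> R) r (Hr : 0 < r) (F : R -> R) :
  (forall x, Rabs x < r -> is_pseries u x (F x)) ->
  (forall x, Rabs x < r -> is_pseries v x (F x)) -> forall n, u n = v n.
Proof.
  intros Hu Hv n. apply PSeries_ext_recip.
  - eapply CV_pos; eauto.
  - eapply CV_pos; eauto.
  - exists (mkposreal r Hr). intros y Hy.
    assert (Hy' : Rabs y < r).
    { unfold ball in Hy; simpl in Hy. unfold AbsRing_ball, abs, minus, plus, opp in Hy. simpl in Hy.
      change (Rabs (y + - 0) < r) in Hy. rewrite Ropp_0, Rplus_0_r in Hy. exact Hy. }
    rewrite (is_pseries_unique _ _ _ (Hu y Hy')).
    rewrite (is_pseries_unique _ _ _ (Hv y Hy')). reflexivity.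
Qed.

Lemma taylor_unique f a b : taylor0 f a -> taylor0 f b -> a = b.
Proof.
  intros Ha Hb. apply functional_extensionality. intros n.
  destruct (pser_of_taylor _ _ Ha) as [ra [Hra [_ Pa]]].
  destruct (pser_of_taylor _ _ Hb) as [rb [Hrb [_ Pb]]].
  assert (Hr : 0 < Rmin ra rb) by (apply Rmin_pos; lra).
  assert (Ka : forall x, Rabs x < Rmin ra rb -> Rabs x < ra)
    by (intros; eapply Rlt_le_trans; [eassumption|apply Rmin_l]).
  assert (Kb : forall x, Rabs x < Rmin ra rb -> Rabs x < rb)
    by (intros; eapply Rlt_le_trans; [eassumption|apply Rmin_r]).
  assert (E1 := pser_uniq (fun n => Re (a n)) (fun n => Re (b n)) _ Hr
    (fun x => Re (f (toD x))) (fun x h => proj1 (Pa x (Ka x h))) (fun x h => proj1 (Pb x (Kb x h))) n).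
  assert (E2 := pser_uniq (fun n => Im (a n)) (fun n => Im (b n)) _ Hr
    (fun x => Im (f (toD x))) (fun x h => proj2 (Pa x (Ka x h))) (fun x h => proj2 (Pb x (Kb x h))) n).
  simpl in E1, E2. destruct (a n), (b n). unfold Re, Im in *; simpl in *. subst. reflexivity.
Qed.

Lemma analytic_taylor f : analytic f -> taylor0 f (coef f).
Proof.
  intros H. unfold coef. apply epsilon_spec.
  destruct (H zeroD) as [r [Hr [c Hc]]]. exists c. exists r. split; [exact Hr|].
  intros z Hz. specialize (Hc z). assert (E : Cminus (dval z) (dval zeroD) = dval z) by apply Cminus_0r. rewrite E in Hc.
  specialize (Hc Hz). exact Hc.
Qed.

Lemma coef_eq f a : analytic f -> taylor0 f a -> coef f = a.
Proof. intros H Ha. eapply taylor_unique. apply analytic_taylor, H. exact Ha. Qed.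

Lemma is_series_first (u : nat -> R) : (forall k, u (S k) = 0) -> is_series u (u O).
Proof.
  intros H. unfold is_series.
  assert (E : forall N, sum_n u N = u O).
  { induction N. apply sum_O. rewrite sum_Sn, IHN, H. change (u O + 0 = u O). ring. }
  eapply filterlim_ext. intros N. symmetry. apply E. apply filterlim_const.
Qed.

Lemma Series_first (u : nat -> R) : (forall k, u (S k) = 0) -> Series u = u O.
Proof. intros H. apply is_series_unique, is_series_first, H. Qed.

Lemma poch_pos b n : 0 < b -> 0 < poch b n.
Proof.
  intros Hb. induction n; simpl. lra.
  apply Rmult_lt_0_compat. exact IHn. pose proof (pos_INR n). lra.
Qed.

Lemma weight_pos beta n : -1 < beta -> 0 < weight beta n.
Proof.
  intros Hb. unfold weight. apply Rdiv_lt_0_compat.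
  apply lt_0_INR, Factorial.lt_O_fact. apply poch_pos. lra.
Qed.

Lemma weight0 beta : weight beta 0 = 1.
Proof. unfold weight. simpl. lra. Qed.

Lemma taylor_fsub x y a b : taylor0 x a -> taylor0 y b ->
  taylor0 (fsub x y) (fun n => Cminus (a n) (b n)).
Proof.
  intros [r1 [H1 Ha]] [r2 [H2 Hb]]. exists (Rmin r1 r2). split. apply Rmin_pos; lra.
  intros z Hz.
  assert (Hz1 : Cmod (dval z) < r1) by (eapply Rlt_le_trans; [exact Hz|apply Rmin_l]).
  assert (Hz2 : Cmod (dval z) < r2) by (eapply Rlt_le_trans; [exact Hz|apply Rmin_r]).
  pose proof (is_series_minus _ _ _ _ (Ha z Hz1) (Hb z Hz2)) as Hs.
  unfold fsub. eapply is_series_ext; [|exact Hs]. intros n. cbv beta.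
  set (p := Cpow (dval z) n). clearbody p. change (plus ?u (opp ?v)) with (Cplus u (Copp v)). Csolve.
Qed.

Lemma analytic_fsub x y : analytic x -> analytic y -> analytic (fsub x y).
Proof.
  intros Hx Hy z0. destruct (Hx z0) as [r1 [H1 [a Ha]]]. destruct (Hy z0) as [r2 [H2 [b Hb]]].
  exists (Rmin r1 r2). split. apply Rmin_pos; lra. exists (fun n => Cminus (a n) (b n)).
  intros z Hz.
  assert (Hz1 : Cmod (Cminus (dval z) (dval z0)) < r1) by (eapply Rlt_le_trans; [exact Hz|apply Rmin_l]).
  assert (Hz2 : Cmod (Cminus (dval z) (dval z0)) < r2) by (eapply Rlt_le_trans; [exact Hz|apply Rmin_r]).
  pose proof (is_series_minus _ _ _ _ (Ha z Hz1) (Hb z Hz2)) as Hs.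
  unfold fsub. eapply is_series_ext; [|exact Hs]. intros n. cbv beta.
  set (p := Cpow _ n). clearbody p. change (plus ?u (opp ?v)) with (Cplus u (Copp v)). Csolve.
Qed.

Lemma coef_fsub x y : analytic x -> analytic y ->
  coef (fsub x y) = fun n => Cminus (coef x n) (coef y n).
Proof.
  intros Hx Hy. apply coef_eq. apply analytic_fsub; assumption.
  apply taylor_fsub; apply analytic_taylor; assumption.
Qed.

Lemma inA2_fsub beta x y : -1 < beta -> inA2 beta x -> inA2 beta y -> inA2 beta (fsub x y).
Proof.
  intros Hb [Ax Ex] [Ay Ey]. split. apply analytic_fsub; assumption.
  rewrite coef_fsub by assumption.
  apply (ex_series_le (K:=R_AbsRing) (V:=R_CompleteNormedModule) _ (fun n => 2 * (weight beta n * Cmod (coef x n) ^ 2) + 2 * (weight beta n * Cmod (coef y n) ^ 2))).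
  - intros n. change (Rabs (weight beta n * Cmod (Cminus (coef x n) (coef y n)) ^ 2) <= 2 * (weight beta n * Cmod (coef x n) ^ 2) + 2 * (weight beta n * Cmod (coef y n) ^ 2)).
    pose proof (weight_pos beta n Hb).
    pose proof (Cmod_triangle (coef x n) (Copp (coef y n))). rewrite Cmod_opp in H0.
    pose proof (Cmod_ge_0 (Cminus (coef x n) (coef y n))).
    pose proof (Cmod_ge_0 (coef x n)). pose proof (Cmod_ge_0 (coef y n)).
    change (Cplus (coef x n) (Copp (coef y n))) with (Cminus (coef x n) (coef y n)) in H0.
    set (u := Cmod (Cminus (coef x n) (coef y n))) in *.
    set (p := Cmod (coef x n)) in *. set (q := Cmod (coef y n)) in *.
    rewrite Rabs_pos_eq by (apply Rmult_le_pos; [lra| apply pow2_ge_0]).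
    assert (u * u <= (p + q) * (p + q)) by (apply Rmult_le_compat; lra).
    assert (u ^ 2 <= 2 * p ^ 2 + 2 * q ^ 2) by (pose proof (pow2_ge_0 (p - q)); nra).
    assert (0 <= weight beta n * (2 * p ^ 2 + 2 * q ^ 2 - u ^ 2)) by (apply Rmult_le_pos; lra). nra.
  - assert (H1 := ex_series_scal (K:=R_AbsRing) (V:=R_NormedModule) 2 _ Ex).
    assert (H2 := ex_series_scal (K:=R_AbsRing) (V:=R_NormedModule) 2 _ Ey).
    exact (ex_series_plus _ _ H1 H2).
Qed.

Definition cst (m : C) : Disc -> C := fun _ => m.
Definition dseq (m : C) (n : nat) : C := match n with O => m | S _ => RtoC 0 end.

Lemma is_series_dseq m w : is_series (V := C_NormedModule) (fun n => Cmult (dseq m n) (Cpow w n)) m.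
Proof.
  unfold is_series.
  assert (E : forall N, sum_n (fun n => Cmult (dseq m n) (Cpow w n)) N = m).
  { induction N. rewrite sum_O. simpl. Csolve. rewrite sum_Sn, IHN. simpl.
    change (plus m ?v) with (Cplus m v). Csolve. }
  eapply filterlim_ext. intros N. symmetry. apply E. apply filterlim_const.
Qed.

Lemma analytic_cst m : analytic (cst m).
Proof.
  intros z0. exists 1. split. lra. exists (dseq m). intros z _. apply is_series_dseq.
Qed.

Lemma coef_cst m : coef (cst m) = dseq m.
Proof.
  apply coef_eq. apply analytic_cst. exists 1. split. lra. intros z _. apply is_series_dseq.
Qed.

Lemma inA2_cst beta m : inA2 beta (cst m).
Proof.
  split. apply analytic_cst. rewrite coef_cst. eexists. apply is_series_first.
  intros k. simpl. rewrite Cmod_0. ring.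
Qed.

Lemma coef0_le_norm beta y : -1 < beta -> inA2 beta y -> Cmod (coef y O) <= A2norm beta y.
Proof.
  intros Hb [Ay Ey]. unfold A2norm.
  set (u := fun n => weight beta n * Cmod (coef y n) ^ 2) in *.
  assert (Hu0 : u O = Cmod (coef y O) ^ 2) by (unfold u; rewrite weight0; ring).
  assert (HS : 0 <= Series (fun k => u (S k))).
  { rewrite <- (Series_first (fun _ => 0)) by reflexivity.
    apply Series_le. intros n. split. lra. unfold u.
    apply Rmult_le_pos. apply Rlt_le, weight_pos, Hb. apply pow2_ge_0.
    exact (proj1 (ex_series_incr_1 u) Ey). }
  rewrite (Series_incr_1 _ Ey), Hu0.
  rewrite <- (sqrt_pow2 (Cmod (coef y O))) at 1 by apply Cmod_ge_0.
  apply sqrt_le_1_alt. lra.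
Qed.

Lemma norm_Re_inner beta y : A2norm beta y = sqrt (Re (A2inner beta y y)).
Proof.
  assert (E : Re (A2inner beta y y) = Series (fun n => Re (A2term beta y y n))) by reflexivity.
  rewrite E. unfold A2norm. f_equal. apply Series_ext. intros n.
  unfold A2term. rewrite <- Cmod2_conj. rewrite re_scal_l. reflexivity.
Qed.

Lemma Cj_isometry beta Cj y : conjugation beta Cj -> inA2 beta y -> A2norm beta (Cj y) = A2norm beta y.
Proof.
  intros [_ [_ [_ [_ H]]]] Hy. rewrite !norm_Re_inner. rewrite H by assumption. reflexivity.
Qed.

Lemma Cj_fsub beta Cj x y : -1 < beta -> conjugation beta Cj -> inA2 beta x -> inA2 beta y ->
  Cj (fsub x y) = fsub (Cj x) (Cj y).
Proof.
  intros Hb [_ [Hadd _]] Hx Hy.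
  assert (E : fadd (fsub x y) y = x).
  { apply functional_extensionality. intros z. unfold fadd, fsub. Csolve. }
  pose proof (Hadd _ _ (inA2_fsub _ _ _ Hb Hx Hy) Hy) as H. rewrite E in H.
  apply functional_extensionality. intros z. apply (f_equal (fun F => F z)) in H.
  unfold fadd, fsub in *. rewrite H. Csolve.
Qed.

Lemma inner_one beta x : A2inner beta (cst (RtoC 1)) x = Cconj (coef x O).
Proof.
  unfold A2inner, A2term. rewrite coef_cst.
  rewrite !Series_first.
  - rewrite weight0. simpl. Csolve.
  - intros k. simpl. Csolve. ring.
  - intros k. simpl. Csolve. ring.
Qed.

Lemma key beta (U : (Disc -> C) -> (Disc -> C)) (h : nat -> Disc -> C) K g :
  -1 < beta -> (forall n, inA2 beta (h n)) -> (forall n, coef (U (h n)) O = K) ->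
  (forall x, inA2 beta x -> inA2 beta (U x)) ->
  (forall x y, inA2 beta x -> inA2 beta y -> U (fsub x y) = fsub (U x) (U y)) ->
  (forall x, inA2 beta x -> A2norm beta (U x) = A2norm beta x) ->
  inA2 beta g -> coef (U g) O = Cplus K (RtoC 1) ->
  forall n, 1 <= A2norm beta (fsub (h n) g).
Proof.
  intros Hb Hh HK HU Hsub Hiso Hg HUg n.
  rewrite <- Hiso by (apply inA2_fsub; auto).
  rewrite Hsub by auto.
  eapply Rle_trans; [| apply coef0_le_norm; [exact Hb| apply inA2_fsub; auto]].
  rewrite coef_fsub by (apply HU; auto).
  rewrite HK, HUg.
  replace (Cminus K (Cplus K (RtoC 1))) with (Copp (RtoC 1)) by Csolve.
  rewrite Cmod_opp, Cmod_1. lra.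
Qed.

Theorem proposition3p2 (beta : R) (phi : Disc -> Disc) :
  -1 < beta ->
  analytic (fun z => dval (phi z)) ->
  complex_symmetric beta (comp_op phi) ->
  ~ hypercyclic beta (comp_op phi) /\
  (forall S, adjoint beta (comp_op phi) S -> ~ hypercyclic beta S).
Proof.
  intros Hb _ [[HT _] [Cj [Hconj [S0 [Hadj HCS]]]]].
  assert (Tone : comp_op phi (cst (RtoC 1)) = cst (RtoC 1)) by reflexivity.
  assert (Hone := inA2_cst beta (RtoC 1)).
  split.
  - intros [f [Hf Hd]].
    destruct Hconj as [HCin [Hadd [Hsc [Hinv Hinn]]]] eqn:EC.
    set (w := Cj (cst (RtoC 1))).
    assert (Hw : inA2 beta w) by (apply HCin, Hone).
    assert (Sw : S0 w = w) by (unfold w; rewrite <- HCS by exact Hone; rewrite Tone; reflexivity).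
    assert (Hit : forall n, inA2 beta (Nat.iter n (comp_op phi) f)).
    { induction n. exact Hf. simpl. apply HT, IHn. }
    assert (Hinner : forall n, A2inner beta (Nat.iter n (comp_op phi) f) w = A2inner beta f w).
    { induction n. reflexivity. simpl. rewrite (proj2 Hadj _ _ (Hit n) Hw), Sw. exact IHn. }
    assert (Rel : forall x, inA2 beta x -> A2inner beta x w = Cconj (coef (Cj x) O)).
    { intros x Hx. pose proof (Hinn (Cj x) (cst (RtoC 1)) (HCin _ Hx) Hone) as H.
      rewrite Hinv in H by exact Hx. unfold w. rewrite H. apply inner_one. }
    set (K := coef (Cj f) O).
    assert (HK : forall n, coef (Cj (Nat.iter n (comp_op phi) f)) O = K).
    { intros n. pose proof (Hinner n) as H. rewrite !Rel in H by auto.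
      apply (f_equal Cconj) in H. rewrite !Cconj_conj in H. exact H. }
    set (g := Cj (cst (Cplus K (RtoC 1)))).
    assert (Hg : inA2 beta g) by (apply HCin, inA2_cst).
    assert (HCg : coef (Cj g) O = Cplus K (RtoC 1)).
    { unfold g. rewrite Hinv by apply inA2_cst. rewrite coef_cst. reflexivity. }
    assert (Hkey := key beta Cj (fun n => Nat.iter n (comp_op phi) f) K g Hb Hit HK HCin
      (fun x y hx hy => Cj_fsub beta Cj x y Hb Hconj hx hy)
      (fun x hx => Cj_isometry beta Cj x Hconj hx) Hg HCg).
    destruct (Hd g Hg 1 Rlt_0_1) as [n Hn]. specialize (Hkey n). simpl in Hkey. lra.
  - intros S [HS HSadj] [f [Hf Hd]].
    assert (Hit : forall n, inA2 beta (Nat.iter n S f)).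
    { induction n. exact Hf. simpl. apply HS, IHn. }
    set (K := coef f O).
    assert (HK : forall n, coef (Nat.iter n S f) O = K).
    { induction n. reflexivity. simpl. rewrite <- IHn.
      pose proof (HSadj _ _ Hone (Hit n)) as H. rewrite Tone, !inner_one in H.
      apply (f_equal Cconj) in H. rewrite !Cconj_conj in H. symmetry. exact H. }
    set (g := cst (Cplus K (RtoC 1))).
    assert (Hg : inA2 beta g) by apply inA2_cst.
    assert (HCg : coef g O = Cplus K (RtoC 1)) by (unfold g; rewrite coef_cst; reflexivity).
    assert (Hkey := key beta (fun x => x) (fun n => Nat.iter n S f) K g Hb Hit HK (fun x hx => hx)
      (fun x y _ _ => eq_refl) (fun x _ => eq_refl) Hg HCg).
    destruct (Hd g Hg 1 Rlt_0_1) as [n Hn]. specialize (Hkey n). simpl in Hkey. lra.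
Qed.
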